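(* Suppose $A_\star\in\mathbb R^{n\times n}$ has a Jordan block with eigenvalue of modulus $|\lambda|=1$ and size $k$, and that $(A_\star,B_\star,C_\star,D_\star)$ is minimal. Then there exists a constant $\mathsf C>0$ depending on $A_\star,B_\star,C_\star$, $n$ and $k$ such that for all $N\ge\max\{20n^2,2k\}$, \[ \sqrt{\Big\|\sum_{t=0}^N\mathscr G_t\Big\|_{\mathrm{op}}}\ge\mathsf C N^k,\qquad\mathscr G_t:=\sum_{s=0}^tC_\star A_\star^{t-s}B_\star B_\star^\top(A_\star^{t-s})^\top C_\star^\top. \]
   Context: Minimality means $\mathrm{rank}[B_\star,A_\star B_\star,\dots,A_\star^{n-1}B_\star]=n$ and $\mathrm{rank}[C_\star^\top,(C_\star A_\star)^\top,\dots,(C_\star A_\star^{n-1})^\top]=n$. *)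

(* Defs.v *)
From HB Require Import structures.
From mathcomp Require Import all_boot all_order all_algebra.
From mathcomp Require Import classical_sets reals.
From mathcomp.real_closed Require Import complex.
Set Implicit Arguments. Unset Strict Implicit. Unset Printing Implicit Defensive.
Import Order.TTheory GRing.Theory Num.Theory.
Local Open Scope ring_scope.
Local Open Scope complex_scope.

Definition vnorm (R : realType) (d : nat) (x : 'cV[R]_d) : R :=
  Num.sqrt (\sum_(i < d) x i 0 ^+ 2).

Definition opnorm (R : realType) (q d : nat) (M : 'M[R]_(q, d)) : R :=
  reals.sup [set r : R | exists x : 'cV[R]_d, vnorm x <= 1 /\ r = vnorm (M *m x)]%classic.

Definition controllable (R : realType) (n m : nat) (A : 'M[R]_n) (B : 'M[R]_(n, m)) : Prop :=
  \rank (\mxrow_(j < n) (A ^+ j *m B)) = n.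

Definition observable (R : realType) (n p : nat) (A : 'M[R]_n) (C : 'M[R]_(p, n)) : Prop :=
  \rank (\mxrow_(j < n) (C *m A ^+ j)^T) = n.

Definition minimal (R : realType) (n m p : nat) (A : 'M[R]_n) (B : 'M[R]_(n, m))
  (C : 'M[R]_(p, n)) (D : 'M[R]_(p, m)) : Prop :=
  controllable A B /\ observable A C.

Definition jordan_block (F : ringType) (k : nat) (lam : F) : 'M[F]_k :=
  \matrix_(i < k, j < k) (if i == j then lam else if (j == i.+1 :> nat) then 1 else 0).

Definition has_jordan_block (F : fieldType) (n : nat) (A : 'M[F]_n) (k : nat) (lam : F) : Prop :=
  (0 < k)%N /\
  exists (r : nat) (M : 'M[F]_r) (P : 'M[F]_(k + r, n)) (Q : 'M[F]_(n, k + r)),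
    P *m Q = 1%:M /\ Q *m P = 1%:M /\
    P *m A *m Q = block_mx (jordan_block k lam) 0 0 M.

Definition cplx_mx (R : rcfType) (q d : nat) (M : 'M[R]_(q, d)) : 'M[R[i]]_(q, d) :=
  map_mx (fun x : R => x%:C) M.

Definition Gterm (R : realType) (n m p : nat) (A : 'M[R]_n) (B : 'M[R]_(n, m))
  (C : 'M[R]_(p, n)) (t : nat) : 'M[R]_p :=
  \sum_(s < t.+1) (C *m A ^+ (t - s) *m B *m B^T *m (A ^+ (t - s))^T *m C^T).

(* Main.v *)
Require Import Defs.
From HB Require Import structures.
From mathcomp Require Import all_boot all_order all_algebra.
From mathcomp Require Import classical_sets reals.
From mathcomp Require Import zify ring lra.
From mathcomp.real_closed Require Import complex.
Import Order.TTheory GRing.Theory Num.Theory.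
Local Open Scope ring_scope.
Local Open Scope complex_scope.
Set Implicit Arguments. Unset Strict Implicit. Unset Printing Implicit Defensive.
Lemma decomp (R : realType) n m p (A : 'M[R]_n) (B : 'M[R]_(n, m)) (C : 'M[R]_(p, n)) :
  controllable A B -> observable A C ->
  exists (W : 'I_n -> 'M[R]_(n, p)) (V : 'I_n -> 'M[R]_(m, n)),
  forall j, A ^+ j = \sum_(i < n) \sum_(l < n) W i *m (C *m A ^+ (i + j + l) *m B) *m V l.
Proof.
rewrite /controllable /observable => hc ho.
have /row_freeP [X hX] : row_free (\mxrow_(j < n) (A ^+ j *m B)) by rewrite /row_free hc.
have /row_freeP [Y hY] : row_free (\mxrow_(j < n) (C *m A ^+ j)^T) by rewrite /row_free ho.
rewrite -(submxcolK X) mul_mxrow_mxcol in hX.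
rewrite -(submxcolK Y) mul_mxrow_mxcol in hY.
have hY' : \sum_(i < n) (submxcol Y i)^T *m (C *m A ^+ i) = 1%:M.
  rewrite -trmx1 -hY linear_sum /=; apply: eq_bigr => i _.
  by rewrite trmx_mul trmxK.
exists (fun i => (submxcol Y i)^T), (fun l => submxcol X l) => j.
have -> : A ^+ j = 1%:M *m A ^+ j *m 1%:M by rewrite mul1mx mulmx1.
rewrite -{1}hY' -hX.
rewrite mulmx_suml mulmx_suml; apply: eq_bigr => i _.

rewrite mulmx_sumr; apply: eq_bigr => l _.
rewrite !mulmxA -!mulmxA; congr (_ *m _).
rewrite !mulmxA; congr (_ *m _ *m _); rewrite -!mulmxA; congr (_ *m _).
by rewrite !mulmxE -!exprD addnA.
Qed.
Lemma jordan_pow (F : comNzRingType) k (lam : F) j (r c : 'I_k) :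
  (jordan_block k lam ^+ j) r c =
  if (r <= c)%N then 'C(j, c - r)%:R * lam ^+ (j - (c - r)) else 0.
Proof.
elim: j r c => [|j IH] r c.
  rewrite expr0 mxE bin0n.
  have -> : (r == c) = (r == c :> nat) by [].
  case: (ltngtP r c) => h.
  - by rewrite subn_eq0 leqNgt h mul0r.
  - by [].
  - by rewrite h subnn mul1r.
rewrite exprSr -mulmxE mxE.
have hJ : forall l : 'I_k, jordan_block k lam l c = lam * (l == c)%:R + (c == l.+1 :> nat)%:R.
  move=> l; rewrite /jordan_block mxE; case: eqP => [->|hl].
  by rewrite mulr1 eqn_leq ltnn andbF addr0.
  by rewrite mulr0 add0r; case: eqP.
under eq_bigr => l _ do rewrite hJ mulrDr.
rewrite big_split /=.
rewrite (bigD1 c) //= eqxx big1 ?addr0; last by move=> l /negbTE ->; rewrite mulr0 mulr0.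
have -> : \sum_(l < k) (jordan_block k lam ^+ j) r l * (c == l.+1 :> nat)%:R =
          if (0 < c)%N then (if (r <= c.-1)%N then 'C(j, c.-1 - r)%:R * lam ^+ (j - (c.-1 - r)) else 0) else 0.
  case: (posnP c) => hc.
    by rewrite big1 // => l _; rewrite hc mulr0.
  have hc' : (c.-1 < k)%N by apply: leq_ltn_trans (leq_pred _) (ltn_ord c).
  rewrite (bigD1 (Ordinal hc')) //= prednK // eqxx mulr1 IH /= big1 ?addr0 // => l hl.
  case: eqP => [hl'|]; last by rewrite mulr0.
  by move: hl; rewrite -val_eqE /= hl' /= eqxx.
rewrite IH mulrC.
case: (ltngtP r c) => h.
- have hc0 : (0 < c)%N by apply: leq_ltn_trans h.
  have hr : (r <= c.-1)%N by rewrite -ltnS prednK.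
  rewrite hc0 hr mulr1.
  have [d hd] : exists d, (c - r = d.+1)%N by exists (c - r).-1; rewrite prednK // subn_gt0.
  have -> : (c.-1 - r = d)%N by rewrite -subn1 subnAC subn1 hd.
  rewrite hd binS natrD mulrDl subSS; congr (_ + _).
  case: (leqP d.+1 j) => hj.
    by rewrite mulrCA -exprS subnSK.
  by rewrite bin_small // !mul0r mulr0.
- rewrite mulr0 add0r.
  case: (posnP c) => hc //=.
  by rewrite leqNgt (leq_trans _ h) // -ltnS prednK.
- rewrite h subnn !bin0 !subn0 mulr1 mul1r -exprS.
  case: (posnP c) => hc /=; first by rewrite addr0 mul1r.
  by rewrite leqNgt ltn_predL hc /= addr0 mul1r.
Qed.

Definition Emx (R : realType) n m p (A : 'M[R]_n) (B : 'M[R]_(n, m)) (C : 'M[R]_(p, n)) s :=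
  C *m A ^+ s *m B.
Definition fsq (R : realType) n m p (A : 'M[R]_n) (B : 'M[R]_(n, m)) (C : 'M[R]_(p, n)) s :=
  \sum_(a < p) \sum_(b < m) (Emx A B C s a b) ^+ 2.
Definition Gsq (R : realType) n m p (A : 'M[R]_n) (B : 'M[R]_(n, m)) (C : 'M[R]_(p, n)) j :=
  \sum_(i < n) \sum_(l < n) fsq A B C (i + j + l).

Lemma le_sum_single (R : numDomainType) (I : finType) (F : I -> R) i0 :
  (forall i, 0 <= F i) -> F i0 <= \sum_i F i.
Proof.
move=> h; rewrite (bigD1 i0) //= lerDl; apply: sumr_ge0 => i _; exact: h.
Qed.
Arguments le_sum_single {R I} F i0 _.

Lemma fsq_ge0 (R : realType) n m p (A : 'M[R]_n) (B : 'M[R]_(n, m)) (C : 'M[R]_(p, n)) s :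
  0 <= fsq A B C s.
Proof. by apply: sumr_ge0 => a _; apply: sumr_ge0 => b _; exact: sqr_ge0. Qed.

Lemma Gsq_ge0 (R : realType) n m p (A : 'M[R]_n) (B : 'M[R]_(n, m)) (C : 'M[R]_(p, n)) j :
  0 <= Gsq A B C j.
Proof. by apply: sumr_ge0 => a _; apply: sumr_ge0 => b _; exact: fsq_ge0. Qed.

Lemma entry_le_Gsq (R : realType) n m p (A : 'M[R]_n) (B : 'M[R]_(n, m)) (C : 'M[R]_(p, n)) j
  (i l : 'I_n) (a : 'I_p) (b : 'I_m) :
  `|Emx A B C (i + j + l) a b| <= Num.sqrt (Gsq A B C j).
Proof.
rewrite -sqrtr_sqr ler_sqrt ?Gsq_ge0 //.
apply: le_trans (le_sum_single _ i _); last by move=> i'; apply: sumr_ge0 => *; exact: fsq_ge0.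
apply: le_trans (le_sum_single _ l _); last by move=> i'; exact: fsq_ge0.
apply: le_trans (le_sum_single _ a _); last by move=> i'; apply: sumr_ge0 => *; exact: sqr_ge0.
apply: le_trans (le_sum_single _ b _) => //; last by move=> i'; exact: sqr_ge0.
Qed.

Lemma normC_real (R : realType) (x : R) : `|x%:C| = `|x|%:C.
Proof. by rewrite normc_def /= expr0n /= addr0 sqrtr_sqr. Qed.

Lemma cplx_mxM (R : realType) a b c (X : 'M[R]_(a, b)) (Y : 'M[R]_(b, c)) :
  cplx_mx (X *m Y) = cplx_mx X *m cplx_mx Y.
Proof. exact: map_mxM. Qed.

Lemma cplx_mxX (R : realType) n (X : 'M[R]_n) j :
  cplx_mx (X ^+ j) = cplx_mx X ^+ j.
Proof.
elim: j => [|j IH]; first by rewrite !expr0; apply/matrixP => a b; rewrite !mxE; case: (a == b).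
by rewrite !exprSr -!mulmxE cplx_mxM IH.
Qed.

Lemma cplx_mx_sum (R : realType) a b (I : finType) (F : I -> 'M[R]_(a, b)) :
  cplx_mx (\sum_i F i) = \sum_i cplx_mx (F i).
Proof.
apply: (big_morph (fun X : 'M[R]_(a, b) => cplx_mx X)).
  by move=> X Y; apply/matrixP => u v; rewrite !mxE rmorphD.
by apply/matrixP => u v; rewrite !mxE rmorph0.
Qed.

Lemma growth (R : realType) n m p k (A : 'M[R]_n) (B : 'M[R]_(n, m)) (C : 'M[R]_(p, n))
  (lam : R[i]) :
  `|lam| = 1 -> has_jordan_block (cplx_mx A) k lam -> controllable A B -> observable A C ->
  exists K : R, 0 < K /\ forall j, ('C(j, k.-1)%:R : R) <= K * Num.sqrt (Gsq A B C j).
Proof.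
move=> hlam [hk [r [M [P [Q [hPQ [hQP hPAQ]]]]]]] hc ho.
have [W [V hWV]] := decomp hc ho.
case: k hk P Q hPQ hQP hPAQ => // k _ P Q hPQ hQP hPAQ /=.
set J := jordan_block k.+1 lam.
have hpow : forall j, P *m cplx_mx (A ^+ j) *m Q = block_mx (J ^+ j) 0 0 (M ^+ j).
  elim=> [|j IH].
    have -> : cplx_mx (1 : 'M[R]_n) = 1%:M by apply/matrixP => a b; rewrite !mxE; case: (a == b).
    by rewrite mulmx1 hPQ [LHS]scalar_mx_block.
  rewrite exprSr -mulmxE cplx_mxM.
  have -> : P *m (cplx_mx (A ^+ j) *m cplx_mx A) *m Q =
     (P *m cplx_mx (A ^+ j) *m Q) *m (P *m cplx_mx A *m Q).
    by rewrite !mulmxA -(mulmxA (P *m _) Q P) hQP mulmx1.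
  rewrite IH hPAQ mulmx_block !mulmx0 !mul0mx !addr0 !add0r.
  by rewrite !mulmxE -!exprSr.
set i0 := lshift r (ord0 : 'I_k.+1); set j0 := lshift r (ord_max : 'I_k.+1).
have hent : forall j, (P *m cplx_mx (A ^+ j) *m Q) i0 j0 = 'C(j, k)%:R * lam ^+ (j - k).
  by move=> j; rewrite hpow block_mxEul jordan_pow /= subn0.
pose al (i l : 'I_n) (a : 'I_p) (b : 'I_m) :=
  (P *m cplx_mx (W i)) i0 a * (cplx_mx (V l) *m Q) b j0.
pose Kc := \sum_i \sum_l \sum_a \sum_b `|al i l a b|.
have hexp : forall j, (P *m cplx_mx (A ^+ j) *m Q) i0 j0 =
   \sum_i \sum_l \sum_a \sum_b al i l a b * (Emx A B C (i + j + l) a b)%:C.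
  move=> j; rewrite hWV cplx_mx_sum mulmx_sumr mulmx_suml summxE; apply: eq_bigr => i _.
  rewrite cplx_mx_sum mulmx_sumr mulmx_suml summxE; apply: eq_bigr => l _.
  have -> : C *m A ^+ (i + j + l) *m B = Emx A B C (i + j + l) by [].
  have -> : P *m cplx_mx (W i *m Emx A B C (i + j + l) *m V l) *m Q =
    (P *m cplx_mx (W i)) *m cplx_mx (Emx A B C (i + j + l)) *m (cplx_mx (V l) *m Q).
    by rewrite !cplx_mxM !mulmxA.
  rewrite mxE; under eq_bigr do rewrite mxE mulr_suml.
  rewrite exchange_big /=; apply: eq_bigr => a _; apply: eq_bigr => b _.
  by rewrite /al [cplx_mx (Emx _ _ _ _) a b]mxE mulrAC.
have Kc_ge0 : 0 <= Kc by do 4! (apply: sumr_ge0 => ? _); exact: normr_ge0.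
have hbound : forall j, ('C(j, k)%:R : R[i]) <= Kc * (Num.sqrt (Gsq A B C j))%:C.
  move=> j.
  have -> : ('C(j, k)%:R : R[i]) = `|(P *m cplx_mx (A ^+ j) *m Q) i0 j0|.
    by rewrite hent normrM normrX hlam expr1n mulr1 normr_nat.
  rewrite hexp /Kc mulr_suml; apply: le_trans (ler_norm_sum _ _ _) _; apply: ler_sum => i _.
  rewrite mulr_suml; apply: le_trans (ler_norm_sum _ _ _) _; apply: ler_sum => l _.
  rewrite mulr_suml; apply: le_trans (ler_norm_sum _ _ _) _; apply: ler_sum => a _.
  rewrite mulr_suml; apply: le_trans (ler_norm_sum _ _ _) _; apply: ler_sum => b _.
  rewrite normrM normC_real ler_wpM2l ?normr_ge0 // lecR.
  exact: entry_le_Gsq.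
have /complex_realP [kr hkr] : Kc \is Num.real by exact: ger0_real.
exists (kr + 1); split.
  by rewrite hkr -(rmorph0 (real_complex R)) lecR in Kc_ge0; rewrite ltr_wpDl.
move=> j; have := hbound j; rewrite hkr -rmorphM -(rmorph_nat (real_complex R)) lecR => h.
apply: le_trans h _; by rewrite ler_wpM2r ?sqrtr_ge0 // lerDl ler01.
Qed.

Lemma vnorm_ge (R : realType) d (x : 'cV[R]_d) i : `|x i 0| <= vnorm x.
Proof.
rewrite /vnorm -sqrtr_sqr ler_sqrt; last by apply: sumr_ge0 => *; exact: sqr_ge0.
by apply: (le_sum_single (fun l => x l 0 ^+ 2)) => l; exact: sqr_ge0.
Qed.

Lemma opnorm_ge (R : realType) q d (M : 'M[R]_(q, d)) x :
  vnorm x <= 1 -> vnorm (M *m x) <= opnorm M.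
Proof.
move=> hx; apply: ub_le_sup; last by exists x.
exists (Num.sqrt (\sum_(l < q) (\sum_(j < d) `|M l j|) ^+ 2)) => y [z [hz ->]].
rewrite /vnorm ler_sqrt; last by apply: sumr_ge0 => *; exact: sqr_ge0.
apply: ler_sum => l _; rewrite -real_normK ?num_real // ler_sqr ?nnegrE ?normr_ge0 //;
  last by apply: sumr_ge0 => *; exact: normr_ge0.
rewrite mxE; apply: le_trans (ler_norm_sum _ _ _) _; apply: ler_sum => j _.
rewrite normrM ler_piMr ?normr_ge0 //.
by apply: le_trans (vnorm_ge z j) hz.
Qed.

Lemma opnorm_diag (R : realType) p (S : 'M[R]_p) i : S i i <= opnorm S.
Proof.
apply: le_trans (opnorm_ge S (x := delta_mx i 0) _).
  by rewrite -colE; apply: le_trans (vnorm_ge _ i); rewrite mxE ler_norm.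
rewrite /vnorm (bigD1 i) //= big1 ?addr0; last by move=> l hl; rewrite mxE (negbTE hl) expr0n.
by rewrite mxE !eqxx expr1n sqrtr1.
Qed.

Local Unset Implicit Arguments.
Lemma sum_mono (R : realType) (f : nat -> R) a b :
  (forall j, 0 <= f j) -> (a <= b)%N -> \sum_(0 <= j < a) f j <= \sum_(0 <= j < b) f j.
Proof.
move=> hf hab; rewrite (big_cat_nat (leq0n a) hab) /= lerDl.
by apply: sumr_ge0 => *; exact: hf.
Qed.

Lemma sum_shift (R : realType) (f : nat -> R) M s L :
  (forall j, 0 <= f j) -> (s <= L)%N ->
  \sum_(0 <= j < M) f (j + s) <= \sum_(0 <= j < M + L) f j.
Proof.
move=> hf hsL.
have -> : \sum_(0 <= j < M) f (j + s) = \sum_(s <= j < M + s) f j.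
  by rewrite -[in RHS](add0n s) big_addn addnK.
apply: le_trans (sum_mono R f _ _ hf (leq_add (leqnn M) hsL)).
rewrite (big_cat_nat (leq0n s) (leq_addl M s)) /= lerDr.
by apply: sumr_ge0 => *; exact: hf.
Qed.

Lemma pow_le_ffact h r : (h ^ r <= 'C(h + r, r) * r`!)%N.
Proof.
rewrite bin_ffact; elim: r => [|r IH] //.
rewrite expnS ffactnS addnS /=; apply: leq_mul => //; apply: leq_trans (leq_addr r h) (leqnSn _).
Qed.

Lemma counting (R : realType) (f : nat -> R) (n k' : nat) (K : R) (N h : nat) :
  (forall j, 0 <= f j) -> 0 < K ->
  (forall j, ('C(j, k')%:R) ^+ 2 <= K ^+ 2 * (\sum_(i < n) \sum_(l < n) f (i + j + l)%N)) ->
  (3 * h + k' + 2 * n <= N.+1)%N ->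
  (h%:R) ^+ (k'.+1 * 2) <=
    (n%:R) ^+ 2 * K ^+ 2 * (k'`!%:R) ^+ 2 * \sum_(t < N.+1) \sum_(j < t.+1) f j :> R.
Proof.
move=> hf hK hb hN.
set M := (h + k' + h)%N.
set T0 := (M + 2 * n).-1.
have hFs : forall t, 0 <= \sum_(j < t) f j by move=> t; apply: sumr_ge0 => *; exact: hf.
have hB : h%:R * \sum_(0 <= j < M + 2 * n) f j <= \sum_(t < N.+1) \sum_(j < t.+1) f j.
  have -> : \sum_(t < N.+1) \sum_(j < t.+1) f j = \sum_(0 <= t < N.+1) \sum_(0 <= j < t.+1) f j.
    by rewrite big_mkord; apply: eq_bigr => t _; rewrite big_mkord.
  set T1 := (M + 2 * n)%N.
  have hT1 : (T1 <= N.+1)%N by rewrite /T1 /M; lia.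
  rewrite (big_cat_nat (leq0n T1) hT1) /=.
  apply: le_trans (_ : _ <= \sum_(T1 <= t < N.+1) \sum_(0 <= j < t.+1) f j) _; last first.
    by rewrite lerDr; apply: sumr_ge0 => t _; apply: sumr_ge0 => *; exact: hf.
  apply: le_trans (_ : _ <= \sum_(T1 <= t < N.+1) \sum_(0 <= j < T1) f j) _; last first.
    apply: ler_sum_nat => t /andP [ht _]; apply: sum_mono => //; exact: leqW.
  rewrite sumr_const_nat -[X in _ <= X]mulr_natl ler_wpM2r //; first by apply: sumr_ge0 => *; exact: hf.
  rewrite ler_nat /T1 /M; lia.
have hC : \sum_(0 <= j < M) (\sum_(i < n) \sum_(l < n) f (i + j + l)%N)
          <= (n%:R) ^+ 2 * \sum_(0 <= j < M + 2 * n) f j.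
  rewrite exchange_big /=.
  apply: le_trans (_ : _ <= \sum_(i < n) \sum_(l < n) \sum_(0 <= j < M + 2 * n) f j) _.
    apply: ler_sum => i _; rewrite exchange_big /=; apply: ler_sum => l _.
    have -> : \sum_(0 <= j < M) f (i + j + l)%N = \sum_(0 <= j < M) f (j + (i + l))%N.
      by apply: eq_bigr => j _; congr f; lia.
    apply: sum_shift => //.
    have := ltn_ord i; have := ltn_ord l; lia.
  by rewrite !sumr_const !card_ord -mulrnA -[X in X <= _]mulr_natl natrM expr2.
have hD : h%:R * ('C(h + k', k')%:R) ^+ 2 <= \sum_(0 <= j < M) ('C(j, k')%:R) ^+ 2 :> R.
  have hM : (h + k' <= M)%N by rewrite /M leq_addr.
  rewrite (big_cat_nat (leq0n _) hM) /=.
  apply: le_trans (_ : _ <= \sum_(h + k' <= j < M) ('C(j, k')%:R) ^+ 2) _; last first.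
    by rewrite lerDr; apply: sumr_ge0 => *; exact: sqr_ge0.
  apply: le_trans (_ : _ <= \sum_(h + k' <= j < M) ('C(h + k', k')%:R) ^+ 2) _.
    by rewrite sumr_const_nat -[X in _ <= X]mulr_natl /M addKn.
  apply: ler_sum_nat => j /andP [hj _].
  by rewrite lerXn2r ?nnegrE ?ler0n // ler_nat leq_bin2l.
have hE : (h%:R) ^+ k' <= k'`!%:R * 'C(h + k', k')%:R :> R.
  by rewrite -natrX -natrM ler_nat mulnC pow_le_ffact.
set X := \sum_(0 <= j < M + 2 * n) f j.
set Y := \sum_(0 <= j < M) (\sum_(i < n) \sum_(l < n) f (i + j + l)%N).
set Z := \sum_(0 <= j < M) ('C(j, k')%:R) ^+ 2 : R.
set T := \sum_(t < N.+1) \sum_(j < t.+1) f j.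
set c := ('C(h + k', k')%:R : R).
set H := (h%:R : R).
set F := (k'`!%:R : R).
have H0 : 0 <= H by rewrite ler0n.
have F0 : 0 <= F by rewrite ler0n.
have c0 : 0 <= c by rewrite ler0n.
have X0 : 0 <= X by apply: sumr_ge0 => *; exact: hf.
have Y0 : 0 <= Y by do 3! (apply: sumr_ge0 => * ); exact: hf.
have hZ : Z <= K ^+ 2 * Y.
  by rewrite /Z /Y mulr_sumr; apply: ler_sum_nat => j _; exact: hb.
have h1 : (H ^+ k') ^+ 2 <= (F * c) ^+ 2.
  by rewrite lerXn2r // nnegrE ?exprn_ge0 ?mulr_ge0.
have -> : H ^+ (k'.+1 * 2) = H ^+ 2 * (H ^+ k') ^+ 2 by rewrite -exprM -exprD; congr (_ ^+ _); lia.
apply: le_trans (_ : _ <= H ^+ 2 * (F * c) ^+ 2) _; first by rewrite ler_wpM2l ?exprn_ge0.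
have -> : H ^+ 2 * (F * c) ^+ 2 = F ^+ 2 * H * (H * c ^+ 2) by ring.
apply: le_trans (_ : _ <= F ^+ 2 * H * Z) _; first by rewrite ler_wpM2l ?mulr_ge0 ?exprn_ge0.
apply: le_trans (_ : _ <= F ^+ 2 * H * (K ^+ 2 * Y)) _; first by rewrite ler_wpM2l ?mulr_ge0 ?exprn_ge0.
apply: le_trans (_ : _ <= F ^+ 2 * H * (K ^+ 2 * ((n%:R) ^+ 2 * X))) _.
  by rewrite ler_wpM2l ?mulr_ge0 ?exprn_ge0 //; rewrite ler_wpM2l ?exprn_ge0 // ltW.
have -> : F ^+ 2 * H * (K ^+ 2 * ((n%:R) ^+ 2 * X)) = (n%:R) ^+ 2 * K ^+ 2 * F ^+ 2 * (H * X) by ring.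
by rewrite ler_wpM2l ?mulr_ge0 ?exprn_ge0 ?ler0n // ltW.
Qed.


Lemma trace_S (R : realType) n m p (A : 'M[R]_n) (B : 'M[R]_(n, m)) (C : 'M[R]_(p, n)) N :
  \sum_(i < p) (\sum_(t < N.+1) Gterm A B C t) i i =
  \sum_(t < N.+1) \sum_(j < t.+1) fsq A B C j.
Proof.
under eq_bigr do rewrite summxE.
rewrite exchange_big /=; apply: eq_bigr => t _.
rewrite /Gterm; under eq_bigr do rewrite summxE.
rewrite exchange_big /= [RHS](reindex_inj rev_ord_inj) /=; apply: eq_bigr => s _.
rewrite subSS.
have -> : C *m A ^+ (t - s) *m B *m B^T *m (A ^+ (t - s))^T *m C^T =
          Emx A B C (t - s) *m (Emx A B C (t - s))^T by rewrite /Emx !trmx_mul !mulmxA.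
rewrite /fsq; apply: eq_bigr => a _; rewrite mxE; apply: eq_bigr => b _.
by rewrite [X in _ * X]mxE expr2.
Qed.

Theorem lemma2 (R : realType) (n m p k : nat)
  (A : 'M[R]_n) (B : 'M[R]_(n, m)) (C : 'M[R]_(p, n)) (D : 'M[R]_(p, m))
  (lam : R[i]) :
  `|lam| = 1 ->
  has_jordan_block (cplx_mx A) k lam ->
  minimal A B C D ->
  exists Cst : R, 0 < Cst /\
    forall N : nat, (maxn (20 * n ^ 2) (2 * k) <= N)%N ->
      Num.sqrt (opnorm (\sum_(t < N.+1) Gterm A B C t)) >= Cst * (N%:R) ^+ k.
Proof.
move=> hlam hjb [hc ho].
have [K [K0 hK]] := growth hlam hjb hc ho.
have [hk0 hkn] : (0 < k)%N /\ (k <= n)%N.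
  case: hjb => hk [r [M [P [Q [hPQ _]]]]]; split => //.
  have := mxrankM_maxl P Q; rewrite hPQ mxrank1 => h1.
  apply: leq_trans (leq_addr r k) (leq_trans h1 (rank_leq_col P)).
have hp : (0 < p)%N.
  move: ho; rewrite /observable => ho.
  have := rank_leq_col (\mxrow_(j < n) (C *m A ^+ j)^T).
  rewrite ho sum_nat_const card_ord; case: (posnP p) => // ->; rewrite muln0; lia.
case: k hk0 hkn hK hjb => // k' _ hkn hK _ /=.
set F := (k'`!%:R : R).
pose Dc : R := 32%:R ^+ (k'.+1 * 2) * ((n%:R) ^+ 2 * K ^+ 2 * F ^+ 2 * p%:R).
have Dc0 : 0 < Dc.
  have n0 : (0 < n)%N by lia.
  have F0 : 0 < F by rewrite ltr0n fact_gt0.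
  rewrite /Dc; apply: mulr_gt0; first by rewrite exprn_gt0 // ltr0n.
  apply: mulr_gt0; last by rewrite ltr0n.
  apply: mulr_gt0; last by rewrite exprn_gt0.
  by apply: mulr_gt0; rewrite exprn_gt0 // ltr0n.
exists (Num.sqrt (Dc^-1)); split; first by rewrite sqrtr_gt0 invr_gt0.
move=> N hN.
set S := \sum_(t < N.+1) Gterm A B C t.
set h := (N %/ 16)%N.
have hN1 : (20 * n ^ 2 <= N)%N by move: hN; rewrite geq_max => /andP [].
have hnn : (n <= n ^ 2)%N by rewrite expnS expn1 leq_pmulr //; lia.
have hh1 : (16 * h <= N)%N by rewrite /h mulnC leq_trunc_div.
have hh2 : (N < 16 * h + 16)%N by rewrite /h {1}(divn_eq N 16) mulnC ltn_add2l ltn_pmod.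
have hnh : (n <= h)%N by lia.
have hcount : (3 * h + k' + 2 * n <= N.+1)%N by lia.
have hNh : (N <= 32 * h)%N by lia.
have hb : forall j, ('C(j, k')%:R) ^+ 2 <= K ^+ 2 * (\sum_(i < n) \sum_(l < n) fsq A B C (i + j + l)%N) :> R.
  move=> j; apply: le_trans (_ : _ <= (K * Num.sqrt (Gsq A B C j)) ^+ 2) _.
    have K0' : 0 <= K := ltW K0.
    by rewrite lerXn2r ?nnegrE ?ler0n ?mulr_ge0 ?sqrtr_ge0.
  by rewrite exprMn sqr_sqrtr ?Gsq_ge0.
have := counting R (fsq A B C) n k' K N h (fsq_ge0 A B C) K0 hb hcount.
rewrite -trace_S -/S => hc1.
have htr : \sum_(i < p) S i i <= p%:R * opnorm S.
  apply: le_trans (_ : _ <= \sum_(i < p) opnorm S) _.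
    by apply: ler_sum => i _; exact: opnorm_diag.
  by rewrite sumr_const card_ord -[X in X <= _]mulr_natl.
have hmain : (N%:R) ^+ (k'.+1 * 2) <= Dc * opnorm S.
  apply: le_trans (_ : _ <= 32%:R ^+ (k'.+1 * 2) * (h%:R) ^+ (k'.+1 * 2)) _.
    rewrite -exprMn lerXn2r ?nnegrE ?mulr_ge0 ?ler0n // -natrM ler_nat //.
  rewrite /Dc -mulrA ler_wpM2l ?exprn_ge0 ?ler0n //.
  apply: le_trans hc1 _.
  have -> : (n%:R) ^+ 2 * K ^+ 2 * F ^+ 2 * p%:R * opnorm S = (n%:R) ^+ 2 * K ^+ 2 * F ^+ 2 * (p%:R * opnorm S) by rewrite mulrA.
  have K0' : 0 <= K := ltW K0.
  apply: ler_wpM2l => //; by rewrite !mulr_ge0 ?exprn_ge0 ?ler0n.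
have op0 : 0 <= opnorm S.
  by rewrite -(pmulr_rge0 _ Dc0); apply: le_trans hmain; rewrite exprn_ge0 ?ler0n.
have -> : (N%:R : R) ^+ k'.+1 = Num.sqrt (((N%:R : R) ^+ k'.+1) ^+ 2).
  by rewrite sqrtr_sqr ger0_norm // exprn_ge0 ?ler0n.
have Dc0' : 0 <= Dc^-1 by rewrite invr_ge0 ltW.
rewrite -sqrtrM // ler_sqrt // -exprM ler_pdivrMl //.
Qed.
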